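(* Consider the structured private pooled-sequencing scheme with constant coverage depth described in the context, with $M\in\mathbb{N}$ unknown individuals, $M$ known individuals, base coverage $\alpha_0\in\mathbb{N}$, and per-read error probability $\eta\in(0,1/2)$. Let $\epsilon\in(0,1)$. If $$\frac{\alpha_0}{2^{M+1}-2}\geq\frac{8\eta(1-\eta)}{(1-2\eta)^2}\ln\left(\frac{1}{\epsilon}\right),$$ then the data collector can produce an estimate $\hat{\mathbf{X}}=\phi(\mathbf{Y},\mathcal{R})$ satisfying the reconstruction condition $\mathbb{P}(\hat{\mathbf{x}}_n\neq \mathbf{x}_n)\le\epsilon$ for every SNP position $n\in[N]$.
   Context: Setting. Each genome is described by $N$ SNP positions, each taking a binary value (0 = minor allele, 1 = major allele). There are $M$ ''unknown'' individuals indexed $m\in\{0,\dots,M-1\}$ whose SNPs form the matrix $\mathbf{X}\in\{0,1\}^{M\times N}$ with entries $X_{m,n}$ (unknown to everyone), and $K=M$ ''known'' individuals indexed $k\in\{0,\dots,M-1\}$ whose SNPs form $\mathbf{Y}\in\{0,1\}^{M\times N}$ with entries $Y_{k,n}$; $\mathbf{Y}$ is known to a trusted data collector but not to the sequencer, and its entries are i.i.d. uniform on $\{0,1\}$, independent of $\mathbf{X}$. Each genome is sheared into fragments; every fragment contains at most one SNP and can be mapped unambiguously to its SNP position. The data collector pools all fragments (without any label identifying the individual) and sends them to a sequencer, which reads each fragment and returns the set of reads $\mathcal{R}$; each read of a SNP is flipped ($0\leftrightarrow 1$) independently with probability $\eta$. In the structured scheme with constant coverage depth, for every SNP position $n$ the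 number of fragments covering position $n$ is exactly $2^m\alpha_0$ for unknown individual $m$ and exactly $2^k\alpha_0$ for known individual $k$, where $\alpha_0\in\mathbb{N}$. Thus for each position $n$ the reads reveal only the total count $\sum_{m}\sum_{i=1}^{2^m\alpha_0}(\tilde X_{m,n,i}+\tilde Y_{m,n,i})$ of read 1's, where $\tilde X_{m,n,i},\tilde Y_{m,n,i}$ are the noisy reads. As in the paper, the aggregated read noise is modeled via its central-limit (Gaussian) approximation: after normalization, the data collector observes $G_n=\sum_{m=0}^{M-1}2^mX_{m,n}+Z_n$ with $Z_n\sim\mathcal{N}(0,\sigma^2)$, $\sigma^2=\frac{2^{M+1}-2}{\alpha_0}\frac{\eta(1-\eta)}{(1-2\eta)^2}$. $\mathbf{x}_n$ and $\hat{\mathbf{x}}_n$ denote the $n$-th columns of $\mathbf{X}$ and $\hat{\mathbf{X}}$. *)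

(* Defs.v *)
From HB Require Import structures.
From mathcomp Require Import all_boot all_order all_algebra.
From mathcomp Require Import all_classical all_reals all_analysis.
Set Implicit Arguments. Unset Strict Implicit. Unset Printing Implicit Defensive.
Import Order.TTheory GRing.Theory Num.Theory.
Local Open Scope ring_scope.

(* Noise variance sigma^2 = (2^(M+1)-2)/alpha0 * eta(1-eta)/(1-2eta)^2 of the
   Gaussian (CLT) model of the aggregated read noise. *)
Definition noise_var {R : realType} (M alpha0 : nat) (eta : R) : R :=
  ((2 ^ M.+1 - 2)%:R / alpha0%:R) * (eta * (1 - eta) / (1 - 2 * eta) ^+ 2).

(* Noise-free normalized observation at SNP position n:
   sum_m 2^m X_{m,n}. *)
Definition pooled_mean {R : realType} (M N : nat) (X : 'M[bool]_(M, N))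
  (n : 'I_N) : R :=
  \sum_(m < M) (2 ^ m)%:R * (X m n)%:R.

Definition column (M N : nat) (X : 'M[bool]_(M, N)) (n : 'I_N)
  : {ffun 'I_M -> bool} := [ffun m => X m n].

(* Main.v *)
Require Import Defs.
From HB Require Import structures.
From mathcomp Require Import all_boot all_order all_algebra.
From mathcomp Require Import all_classical all_reals all_analysis.
From mathcomp Require Import measurable_realfun.
From mathcomp Require Import ring lra zify.
Import Order.TTheory GRing.Theory Num.Theory.
Import numFieldNormedType.Exports.
Local Open Scope classical_set_scope.
Local Open Scope ring_scope.


Section tail.
Variables (R : realType) (s : R).
Hypothesis s0 : 0 < s.
Local Notation f := (normal_pdf (0:R) s).
Local Notation P := (normal_prob (0:R) s).
Local Notation mu := (@lebesgue_measure R).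

Let sn0 : s != 0. Proof. by rewrite gt_eqF. Qed.

Lemma f_even x : f (- x) = f x.
Proof. by rewrite (normal_pdfE _ sn0) /normal_fun !subr0 sqrrN. Qed.

Lemma f_shift t x : 0 <= t -> t <= x ->
  f x <= expR (- t ^+ 2 / (s ^+ 2 *+ 2)) * f (x - t).
Proof.
move=> t0 tx; rewrite (normal_pdfE _ sn0) /normal_fun !subr0.
rewrite mulrCA ler_wpM2l ?normal_peak_ge0// -expRD ler_expR.
have c0 : 0 < (s ^+ 2 *+ 2)^-1 by rewrite invr_gt0 pmulrn_lgt0 // exprn_gt0.
set ci := (s ^+ 2 *+ 2)^-1 in c0 *.
have h : 0 <= ci * t * (x - t) by rewrite mulr_ge0 ?mulr_ge0 ?subr_ge0 // ltW.
rewrite !mulNr; nra.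
Qed.

Lemma mf : measurable_fun setT f.
Proof. exact: measurable_normal_pdf. Qed.

Lemma cf : continuous f.
Proof. exact: continuous_normal_pdf. Qed.

Lemma L2 t : P `]-oo, - t] = P `[t, +oo[.
Proof.
rewrite /normal_prob ge0_integration_by_substitutionNy //.
- by apply: eq_integral => x _ /=; rewrite f_even.
- exact: continuous_subspaceT cf.
- by move=> x _; exact: normal_pdf_ge0.
Qed.


Lemma L1 t : 0 <= t ->
  (P `[t, +oo[ <= (expR (- t ^+ 2 / (s ^+ 2 *+ 2)))%:E * P `[0%R, +oo[)%E.
Proof.
move=> t0; set e := expR _.
pose F := fun x : R => x - t.
have dF : F^`()%classic = cst 1.
  apply/funext => x; rewrite derive1E /F deriveB// derive_id derive_cst subr0 //.
have := @increasing_ge0_integration_by_substitutiony R F f t.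
rewrite dF /= /F subrr; move=> H; rewrite /normal_prob H; last first.
- by move=> x _; exact: normal_pdf_ge0.
- exact: continuous_subspaceT cf.
- exact: cvg_addrr.
- split.
    by move=> x _; apply: derivableB.
  apply: cvg_at_right_filter; apply: cvgB; [exact: cvg_id | exact: cvg_cst].
- exact: is_cvg_cst.
- exact: is_cvg_cst.
- by move=> x _; exact: cst_continuous.
- by move=> x y _ _ xy; rewrite ltrD2r.
rewrite -ge0_integralZl //; first last.
- by rewrite lee_fin expR_ge0.
- by move=> x _; rewrite lee_fin mulr1 normal_pdf_ge0.
- apply/measurable_EFinP; apply: measurable_funM => //.
  apply: measurableT_comp => //; first exact: mf.
  exact: measurable_funB.
apply: ge0_le_integral => //.
- by move=> x _; rewrite lee_fin normal_pdf_ge0.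
- apply/measurable_EFinP; exact: measurable_funTS mf.
- apply/measurable_EFinP; apply: measurable_funM => //.
  apply: measurable_funM => //.
  apply: measurableT_comp => //; first exact: mf.
  exact: measurable_funB.
- move=> x; rewrite /= in_itv /= andbT => tx.
  by rewrite -EFinM lee_fin mulr1 f_shift.
Qed.


Lemma L3 : (P `[0%R, +oo[ + P `[0%R, +oo[ = 1)%E.
Proof.
have h1 : P `]-oo, 0%R] = P `[0%R, +oo[ by have := L2 0; rewrite oppr0.
have h2 : P `]-oo, 0%R] = (P `]-oo, 0%R[ + P [set 0%R])%E.
  rewrite -measureU //; last first.
    apply/seteqP; split => x //= [] /[swap] ->; by rewrite in_itv /= ltxx.
  congr P; apply/seteqP; split => x /=; rewrite !in_itv /= ?andbT.
    by rewrite le_eqVlt => /orP [/eqP ->|]; [right|left].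
  by case=> [/ltW|->].
have h3 : P [set 0%R] = 0%E.
  apply: (@normal_prob_dominates R 0 s [set 0%R]) => //.
  by apply/measure0_null_setP => //; exact: lebesgue_measure_set1.
rewrite -{1}h1 h2 h3 adde0 -measureU //; last first.
  apply/seteqP; split => x //= []; rewrite !in_itv /= ?andbT => a b.
  by have := lt_le_trans a b; rewrite ltxx.
have -> : `]-oo, 0%R[ `|` `[0%R, +oo[ = [set: R].
  apply/seteqP; split => x //= _; rewrite !in_itv /= ?andbT.
  by case: (ltP x 0) => h; [left|right].
exact: probability_setT.
Qed.

Lemma tail_bound t (A : set R) : 0 <= t -> measurable A ->
  A `<=` [set z | z < - t \/ t <= z] ->
  (P A <= (expR (- t ^+ 2 / (s ^+ 2 *+ 2)))%:E)%E.
Proof.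
move=> t0 mA sA.
apply: (@le_trans _ _ (P (`]-oo, - t] `|` `[t, +oo[))).
  apply: le_measure => //; rewrite ?inE //.
  - exact: measurableU.
  - move=> x /sA [h|h]; [left|right]; rewrite /= in_itv /= ?andbT //.
    exact: ltW.
apply: (le_trans (measureU2 _ _ _)) => //.
change (P `]-oo, (- t)%R] + P `[t, +oo[ <= (expR (- t ^+ 2 / (s ^+ 2 *+ 2)))%:E)%E; rewrite L2.
apply: le_trans; first exact: (leeD (L1 t t0) (L1 t t0)).
rewrite -ge0_muleDr ?L3 ?mule1 //; exact: measure_ge0.
Qed.

End tail.


Definition bval {M : nat} (w : {ffun 'I_M -> bool}) : nat :=
  (\sum_(m < M) 2 ^ m * w m)%N.

Lemma bval_inj M : injective (@bval M).
Proof.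
elim: M => [|M IH] w1 w2 h.
  by apply/ffunP => -[].
pose w1' : {ffun 'I_M -> bool} := [ffun i => w1 (lift ord0 i)].
pose w2' : {ffun 'I_M -> bool} := [ffun i => w2 (lift ord0 i)].
have E (w : {ffun 'I_M.+1 -> bool}) : bval w = (w ord0 + 2 * bval [ffun i => w (lift ord0 i)])%N.
  rewrite /bval big_ord_recl expn0 mul1n; congr addn.
  rewrite big_distrr; apply: eq_bigr => i _ /=; rewrite ffunE expnS mulnA //.
move: h; rewrite (E w1) (E w2) -/w1' -/w2' => h.
have h0 : w1 ord0 = w2 ord0.
  by move: h; case: (w1 ord0); case: (w2 ord0) => //= hh; exfalso; lia.
have h' : bval w1' = bval w2'.
  by move: h; rewrite h0; case: (w2 ord0) => /= hh; lia.
have := IH _ _ h' => /ffunP hh.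
apply/ffunP => i; case: (unliftP ord0 i) => [j ->|->] //.
by have := hh j; rewrite !ffunE.
Qed.

Section decoder.
Variables (R : realType) (M : nat).

Definition inI (w : {ffun 'I_M -> bool}) (g : R) : bool :=
  ((bval w)%:R - 1/2 <= g) && (g < (bval w)%:R + 1/2).

Definition phi (g : R) : {ffun 'I_M -> bool} :=
  odflt [ffun => false] [pick w | inI w g].

Lemma phi_ok c g : inI c g -> phi g = c.
Proof.
move=> hc; rewrite /phi; case: pickP => [w hw|/(_ c)]; last by rewrite hc.
apply: bval_inj; move: hw hc; rewrite /inI => /andP[a b] /andP[a' b'].
apply/eqP; rewrite eqn_leq; apply/andP; split.
  rewrite -ltnS -(ltr_nat R) -addn1 natrD; lra.
rewrite -ltnS -(ltr_nat R) -addn1 natrD; lra.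
Qed.

Lemma measurable_inI w : measurable [set g : R | inI w g].
Proof.
have -> : [set g : R | inI w g] = `[(bval w)%:R - 1/2, (bval w)%:R + 1/2[%classic.
  by apply/seteqP; split => x /=; rewrite in_itv.
exact: measurable_itv.
Qed.

Lemma measurable_phi v : measurable (phi @^-1` [set v]).
Proof.
have -> : phi @^-1` [set v] = [set g | inI v g] `|`
   ([set _ | v = [ffun => false]] `&` ~` \bigcup_(w in setT) [set g | inI w g]).
  apply/seteqP; split => g /=.
    rewrite /phi; case: pickP => [w hw|hn] /= <-.
      by left.
    by right; split => // -[w _]; rewrite /= hn.
  case=> [/phi_ok //|[-> hn]].
  rewrite /phi; case: pickP => [w hw|] //=.
  by exfalso; apply: hn; exists w.
apply: measurableU; first exact: measurable_inI.
apply: measurableI.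
  by case: (pselect (v = [ffun => false])) => h;
    [rewrite (_ : [set _ | _] = setT) // ; apply/seteqP; split|
     rewrite (_ : [set _ | _] = set0) //; apply/seteqP; split].
apply: measurableC; apply: fin_bigcup_measurable => //.
by move=> w _; exact: measurable_inI.
Qed.

End decoder.

Lemma num_aux (R : realType) (eta d L a K : R) :
  0 < eta * (1 - eta) / d -> 0 < L -> 0 < a -> 0 < K ->
  8 * eta * (1 - eta) / d * L <= a / K ->
  - (1/2) ^+ 2 / ((K / a * (eta * (1 - eta) / d)) *+ 2) <= - L.
Proof.
have -> : 8 * eta * (1 - eta) / d = 8 * (eta * (1 - eta) / d) by rewrite !mulrA.
set c := eta * (1 - eta) / d => c0 L0 a0 K0 h.
have q0 : 0 < K / a by rewrite divr_gt0.
set q := K / a in q0 *.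
have e1 : q * (a / K) = 1 by rewrite -invf_div mulfV // gt_eqF.
have h2 : q * (8 * c * L) <= 1.
  by apply: (le_trans (ler_wpM2l (ltW q0) h)); rewrite e1.
rewrite mulNr lerN2 ler_pdivlMr; last by rewrite pmulrn_lgt0 // mulr_gt0.
rewrite -mulr_natr; nra.
Qed.

Theorem theorem1 (R : realType) (M alpha0 : nat) (eta eps : R) :
  0 < eta < 1 / 2 ->
  0 < eps < 1 ->
  8 * eta * (1 - eta) / (1 - 2 * eta) ^+ 2 * ln (1 / eps)
    <= alpha0%:R / (2 ^ M.+1 - 2)%:R ->
  exists phi : R -> {ffun 'I_M -> bool},
    (forall v : {ffun 'I_M -> bool}, measurable (phi @^-1` [set v])) /\
    forall (N : nat) (X : 'M[bool]_(M, N)) (n : 'I_N),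
      (normal_prob 0 (Num.sqrt (noise_var M alpha0 eta))
         [set z : R | phi (pooled_mean X n + z)%R != column X n] <= eps%:E)%E.
Proof.
move=> /andP[e0 e12] /andP[p0 p1] H.
exists (@phi R M); split; first exact: measurable_phi.
move=> N X n.
have L0 : 0 < ln (1 / eps).
  by apply: ln_gt0; rewrite div1r invf_gt1.
have c0 : 0 < eta * (1 - eta) / (1 - 2 * eta) ^+ 2.
  by apply: divr_gt0; [apply: mulr_gt0; lra | apply: exprn_gt0; lra].
have pos : 0 < 8 * eta * (1 - eta) / (1 - 2 * eta) ^+ 2 * ln (1 / eps).
  rewrite (_ : 8 * eta * (1 - eta) / (1 - 2 * eta) ^+ 2 = 8 * (eta * (1 - eta) / (1 - 2 * eta) ^+ 2)); last by rewrite !mulrA.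
  by apply: mulr_gt0 => //; apply: mulr_gt0.
have K0 : 0 < ((2 ^ M.+1 - 2)%N%:R : R).
  rewrite lt_neqAle ler0n andbT eq_sym; apply/negP => /eqP K0.
  by move: H; rewrite K0 invr0 mulr0 => H; have := lt_le_trans pos H; rewrite ltxx.
have a0 : 0 < (alpha0%:R : R).
  rewrite lt_neqAle ler0n andbT eq_sym; apply/negP => /eqP a0.
  by move: H; rewrite a0 mul0r => H; have := lt_le_trans pos H; rewrite ltxx.
have nv0 : 0 < noise_var M alpha0 eta by rewrite /noise_var mulr_gt0 // divr_gt0.
have muE : pooled_mean X n = ((bval (column X n))%:R : R).
  rewrite /pooled_mean /bval natr_sum; apply: eq_bigr => m _.
  by rewrite ffunE natrM.
set c := column X n.
set A := [set z : R | @phi R M (pooled_mean X n + z)%R != c].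
have mA : measurable A.
  have -> : A = ~` ((fun z => pooled_mean X n + z) @^-1` (@phi R M @^-1` [set c])).
    by apply/seteqP; split => z /= /eqP.
  apply: measurableC.
  have mf : measurable_fun setT (fun z : R => pooled_mean X n + z).
    exact: measurable_funD.
  by have := mf measurableT _ (@measurable_phi R M c); rewrite setTI.
have sA : A `<=` [set z | z < - (1/2) \/ 1/2 <= z].
  move=> z /= hz; case: (ltP z (-(1/2))) => [h|h1]; [by left|right].
  rewrite leNgt; apply/negP => h2; move/negP: hz; apply; apply/eqP.
  by apply: phi_ok; rewrite /inI -muE; apply/andP; split; lra.
have s0 : 0 < Num.sqrt (noise_var M alpha0 eta) by rewrite sqrtr_gt0.
have t0 : 0 <= 1 / 2 :> R by lra.
apply: le_trans; first exact: (@tail_bound R _ s0 (1/2) A t0 mA sA).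
rewrite lee_fin sqr_sqrtr; last exact: ltW.
rewrite -[X in _ <= X](@lnK _ eps) ?posrE // ler_expR.
have -> : ln eps = - ln (1 / eps) by rewrite div1r lnV ?opprK // posrE.
exact: num_aux.
Qed.
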